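(* Let $\mathcal{A}$ be an admissibly deflation-percolating subcategory of a conflation category $\mathcal{C}$. Let $f\colon C\to A$ be a morphism in $\mathcal{C}$ with $A\in\mathcal{A}$. If $f$ is a monomorphism, then $f$ is an inflation; if $f$ is an epimorphism, then $f$ is a deflation. In particular, every morphism $X\to 0$ is a deflation.
   Context: A conflation category is an additive category together with a class of kernel-cokernel pairs $A\xrightarrow{f}B\xrightarrow{g}C$ ($f=\ker g$, $g=\operatorname{coker} f$), closed under isomorphisms, called conflations; first map an inflation, second a deflation. A non-empty full subcategory $\mathcal{A}$ of a conflation category $\mathcal{C}$ is admissibly deflation-percolating if: (A1) for every conflation $A'\rightarrowtail A\twoheadrightarrow A''$, $A\in\mathcal{A}$ iff $A',A''\in\mathcal{A}$; (A2) every morphism $C\to A$ with $A\in\mathcal{A}$ factors as a deflation $C\twoheadrightarrow A'$ followed by an inflation $A'\rightarrowtail A$ with $A'\in\mathcal{A}$; (A3) if $a\colon C\rightarrowtail D$ is an inflation and $b\colon C\twoheadrightarrow A$ a deflation with $A\in\mathcal{A}$, the pushout of $a$ along $b$ exists and yields a deflation $D\twoheadrightarrow P$ and an inflation $A\rightarrowtail P$. *)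

(* Defs.v *)
From HB Require Import structures.
From mathcomp Require Import all_boot all_algebra.
Set Implicit Arguments. Unset Strict Implicit. Unset Printing Implicit Defensive.
Import GRing.Theory.
Local Open Scope ring_scope.

Record AddCat := {
  Obj : Type;
  Mor : Obj -> Obj -> zmodType;
  idm : forall A, Mor A A;
  comp : forall A B C, Mor B C -> Mor A B -> Mor A C;
  comp_idl : forall A B (f : Mor A B), comp (idm B) f = f;
  comp_idr : forall A B (f : Mor A B), comp f (idm A) = f;
  comp_assoc : forall A B C D (h : Mor C D) (g : Mor B C) (f : Mor A B),
      comp h (comp g f) = comp (comp h g) f;
  comp_addl : forall A B C (g1 g2 : Mor B C) (f : Mor A B),
      comp (g1 + g2) f = comp g1 f + comp g2 f;
  comp_addr : forall A B C (g : Mor B C) (f1 f2 : Mor A B),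
      comp g (f1 + f2) = comp g f1 + comp g f2;
  zobj : Obj;
  zobj_from : forall A (f : Mor zobj A), f = 0;
  zobj_to : forall A (f : Mor A zobj), f = 0;
  bip : Obj -> Obj -> Obj;
  bip_i1 : forall A B, Mor A (bip A B);
  bip_i2 : forall A B, Mor B (bip A B);
  bip_p1 : forall A B, Mor (bip A B) A;
  bip_p2 : forall A B, Mor (bip A B) B;
  bip_p1i1 : forall A B, comp (bip_p1 A B) (bip_i1 A B) = idm A;
  bip_p2i2 : forall A B, comp (bip_p2 A B) (bip_i2 A B) = idm B;
  bip_p1i2 : forall A B, comp (bip_p1 A B) (bip_i2 A B) = 0;
  bip_p2i1 : forall A B, comp (bip_p2 A B) (bip_i1 A B) = 0;
  bip_sum : forall A B, comp (bip_i1 A B) (bip_p1 A B)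
                        + comp (bip_i2 A B) (bip_p2 A B) = idm (bip A B)
}.

Arguments idm {a} A.
Arguments comp {a A B C} g f.
Arguments zobj {a}.
Notation "g ⊚ f" := (comp g f) (at level 40, left associativity).

Section Notions.
Variable K : AddCat.
Implicit Types A B C D X : Obj K.

Definition is_mono A B (f : Mor A B) : Prop :=
  forall X (u v : Mor X A), f ⊚ u = f ⊚ v -> u = v.
Definition is_epi A B (f : Mor A B) : Prop :=
  forall X (u v : Mor B X), u ⊚ f = v ⊚ f -> u = v.
Definition is_iso A B (f : Mor A B) : Prop :=
  exists g : Mor B A, g ⊚ f = idm A /\ f ⊚ g = idm B.

Definition is_kernel A B C (f : Mor A B) (g : Mor B C) : Prop :=
  g ⊚ f = 0 /\
  forall X (h : Mor X B), g ⊚ h = 0 -> exists! u : Mor X A, f ⊚ u = h.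
Definition is_cokernel A B C (f : Mor A B) (g : Mor B C) : Prop :=
  g ⊚ f = 0 /\
  forall X (h : Mor B X), h ⊚ f = 0 -> exists! u : Mor C X, u ⊚ g = h.

Definition is_pushout C D A P (a : Mor C D) (b : Mor C A)
    (p : Mor D P) (q : Mor A P) : Prop :=
  p ⊚ a = q ⊚ b /\
  forall X (x : Mor D X) (y : Mor A X), x ⊚ a = y ⊚ b ->
    exists! u : Mor P X, u ⊚ p = x /\ u ⊚ q = y.
End Notions.

Record ConfCat := {
  ccat :> AddCat;
  conf : forall A B C : Obj ccat, Mor A B -> Mor B C -> Prop;
  conf_kc : forall A B C (f : Mor A B) (g : Mor B C),
      conf f g -> is_kernel f g /\ is_cokernel f g;
  conf_iso : forall A B C A' B' C' (f : Mor A B) (g : Mor B C)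
      (f' : Mor A' B') (g' : Mor B' C') (a : Mor A A') (b : Mor B B') (c : Mor C C'),
      conf f g -> is_iso a -> is_iso b -> is_iso c ->
      b ⊚ f = f' ⊚ a -> c ⊚ g = g' ⊚ b -> conf f' g'
}.

Arguments conf {c0 A B C} f g.

Definition inflation (K : ConfCat) (A B : Obj K) (f : Mor A B) : Prop :=
  exists C (g : Mor B C), conf f g.
Definition deflation (K : ConfCat) (B C : Obj K) (g : Mor B C) : Prop :=
  exists A (f : Mor A B), conf f g.

(** Admissibly deflation-percolating (non-empty, full) subcategory,
    given by a predicate on objects. *)
Definition adm_defl_percolating (K : ConfCat) (inA : Obj K -> Prop) : Prop :=
  (exists A, inA A) /\
  (* A1 *)
  (forall A' A A'' (f : Mor A' A) (g : Mor A A''), conf f g ->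
      (inA A <-> inA A' /\ inA A'')) /\
  (* A2 *)
  (forall C A (h : Mor C A), inA A ->
      exists A' (d : Mor C A') (i : Mor A' A),
        inA A' /\ deflation d /\ inflation i /\ h = i ⊚ d) /\
  (* A3 *)
  (forall C D A (a : Mor C D) (b : Mor C A), inflation a -> deflation b -> inA A ->
      exists P (p : Mor D P) (q : Mor A P),
        is_pushout a b p q /\ deflation p /\ inflation q).

(* Main.v *)
Require Import Defs.
From mathcomp Require Import all_boot all_algebra.
Local Open Scope ring_scope.
Import GRing.Theory.

Section Aux.
Variable K : ConfCat.

Lemma comp0r (A B C : Obj K) (g : Mor B C) : g ⊚ (0 : Mor A B) = 0.
Proof.
have H := comp_addr g (0 : Mor A B) 0. rewrite addr0 in H.
apply: (@addrI _ (g ⊚ (0 : Mor A B))). by rewrite addr0 -H.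
Qed.

Lemma comp0l (A B C : Obj K) (f : Mor A B) : (0 : Mor B C) ⊚ f = 0.
Proof.
have H := comp_addl (0 : Mor B C) 0 f. rewrite addr0 in H.
apply: (@addrI _ ((0 : Mor B C) ⊚ f)). by rewrite addr0 -H.
Qed.

Lemma kernel_mono (A B C : Obj K) (f : Mor A B) (g : Mor B C) :
  is_kernel f g -> is_mono f.
Proof.
move=> [gf H] X u v e.
have h0 : g ⊚ (f ⊚ u) = 0 by rewrite comp_assoc gf comp0l.
have [w [_ Hw]] := H X (f ⊚ u) h0.
by rewrite -(Hw u erefl) -(Hw v (esym e)).
Qed.

Lemma cokernel_epi (A B C : Obj K) (f : Mor A B) (g : Mor B C) :
  is_cokernel f g -> is_epi g.
Proof.
move=> [gf H] X u v e.
have h0 : (u ⊚ g) ⊚ f = 0 by rewrite -comp_assoc gf comp0r.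
have [w [_ Hw]] := H X (u ⊚ g) h0.
by rewrite -(Hw u erefl) -(Hw v (esym e)).
Qed.

Lemma infl_mono (A B : Obj K) (f : Mor A B) : inflation f -> is_mono f.
Proof. move=> [C [g c]]; exact: kernel_mono (proj1 (conf_kc c)). Qed.

Lemma defl_epi (A B : Obj K) (f : Mor A B) : deflation f -> is_epi f.
Proof. move=> [C [g c]]; exact: cokernel_epi (proj2 (conf_kc c)). Qed.

Lemma iso_id (A : Obj K) : is_iso (idm A).
Proof. exists (idm A); by rewrite comp_idl. Qed.

Lemma mono_infl_comp (C A' A : Obj K) (d : Mor C A') (i : Mor A' A) :
  deflation d -> inflation i -> is_mono (i ⊚ d) -> inflation (i ⊚ d).
Proof.
move=> [Kk [k ckd]] [Z [g cig]] mono.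
have [dk Hcok] := proj2 (conf_kc ckd).
have dm : is_mono d.
  move=> X u v e; apply: mono; by rewrite -!comp_assoc e.
have k0 : k = 0.
  apply: dm; by rewrite dk comp0r.
have [u [ud _]] := Hcok C (idm C) (ltac:(by rewrite k0 comp0r)).
have du : d ⊚ u = idm A'.
  have de : is_epi d by apply: defl_epi; exists Kk, k.
  apply: de.
  by rewrite -comp_assoc ud comp_idl comp_idr.
exists Z, g.
eapply conf_iso with (a := u) (b := idm A) (c := idm Z); first exact: cig.
- exists d; by split.
- exact: iso_id.
- exact: iso_id.
- by rewrite comp_idl -comp_assoc du comp_idr.
- by rewrite comp_idl comp_idr.
Qed.

Lemma epi_defl_comp (C A' A : Obj K) (d : Mor C A') (i : Mor A' A) :
  deflation d -> inflation i -> is_epi (i ⊚ d) -> deflation (i ⊚ d).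
Proof.
move=> [Kk [k ckd]] [Z [g cig]] epi.
have [gi Hker] := proj1 (conf_kc cig).
have ie : is_epi i.
  move=> X u v e; apply: epi; by rewrite !comp_assoc e.
have g0 : g = 0.
  apply: ie; by rewrite gi comp0l.
have [u [iu _]] := Hker A (idm A) (ltac:(by rewrite g0 comp0l)).
have ui : u ⊚ i = idm A'.
  have im : is_mono i by apply: infl_mono; exists Z, g.
  apply: im.
  by rewrite comp_assoc iu comp_idl comp_idr.
exists Kk, k.
eapply conf_iso with (a := idm Kk) (b := idm C) (c := i); first exact: ckd.
- exact: iso_id.
- exact: iso_id.
- exists u; by split.
- by rewrite comp_idl comp_idr.
- by rewrite comp_idr.
Qed.

End Aux.

Theorem mainTheorem14 (K : ConfCat) (inA : Obj K -> Prop) :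
  adm_defl_percolating inA ->
  (forall (C A : Obj K) (f : Mor C A), inA A ->
     (is_mono f -> inflation f) /\ (is_epi f -> deflation f)) /\
  (forall (X : Obj K) (f : Mor X zobj), deflation f).
Proof.
move=> [[A0 HA0] [A1 [A2 A3]]].
have part1 : forall (C A : Obj K) (f : Mor C A), inA A ->
     (is_mono f -> inflation f) /\ (is_epi f -> deflation f).
  move=> C A f HA.
  have [A' [d [i [HA' [dd [ii ->]]]]]] := A2 C A f HA.
  split; [exact: mono_infl_comp | exact: epi_defl_comp].
split => //.
move=> X f.
have [A' [d [i [HA' [dd [ii e]]]]]] := A2 A0 A0 0 HA0.
have d0 : d = 0.
  have im := @infl_mono _ _ _ _ ii. apply: im; by rewrite -e comp0r.
have id0 : idm A' = 0.
  have de := @defl_epi _ _ _ _ dd. apply: de; by rewrite comp_idl comp0l.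
have allz : forall Y (u : Mor A' Y), u = 0.
  by move=> Y u; rewrite -(comp_idr u) id0 comp0r.
have [_ Hd] := part1 X A' 0 HA'.
have [Kk [k ck]] := Hd (fun Y u v _ => etrans (allz Y u) (esym (allz Y v))).
exists Kk, k.
eapply conf_iso with (a := idm Kk) (b := idm X) (c := (0 : Mor A' zobj)); first exact: ck.
- exact: iso_id.
- exact: iso_id.
- exists 0; split; first by rewrite id0 comp0l.
  exact: etrans (zobj_to _) (esym (zobj_to _)).
- by rewrite comp_idl comp_idr.
- exact: etrans (zobj_to _) (esym (zobj_to _)).
Qed.
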